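(* $[N,L_G]=-i\mathbf 1$ on $\mathrm D(NL_G)\cap\mathrm D(L_GN)$.
   Context: $\ell^2=\ell^2(\mathbb N)$, $\mathbb N=\{0,1,\dots\}$, basis $(\xi_n)$; $N\xi_n=n\xi_n$ (self-adjoint, maximal domain); $L$ left shift ($L\xi_n=\xi_{n-1}$, $L\xi_0=0$), $L^*$ right shift. $L_G$ is defined by $\mathrm D(L_G)=\{\varphi\in\ell^2:\lim_{K\to\infty}\sum_{k=1}^K\frac1k(L^{*k}-L^k)\varphi\text{ exists}\}$, $L_G\varphi=i\sum_{k=1}^\infty\frac1k(L^{*k}-L^k)\varphi$. Products of operators have their natural domains, and ''$[A,B]=C$ on $\mathcal D$'' means $(AB-BA)\varphi=C\varphi$ for $\varphi\in\mathcal D\subset\mathrm D(AB)\cap\mathrm D(BA)$. *)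

(* Defs.v *)
From Stdlib Require Import Reals.
From Coquelicot Require Import Coquelicot.
Open Scope R_scope.

Definition l2 (f : nat -> C) : Prop := ex_series (fun n => (Cmod (f n)) ^ 2).

Definition l2_dist2 (f g : nat -> C) : R :=
  Series (fun n => (Cmod (Cminus (f n) (g n))) ^ 2).

Definition l2_lim (u : nat -> nat -> C) (g : nat -> C) : Prop :=
  l2 g /\ (forall K, l2 (u K)) /\ is_lim_seq (fun K => l2_dist2 (u K) g) 0.

(* left shift L xi_n = xi_{n-1}, L xi_0 = 0 : (L f)(n) = f(n+1) *)
Definition Lsh (f : nat -> C) : nat -> C := fun n => f (S n).
Definition Rsh (f : nat -> C) : nat -> C :=
  fun n => match n with O => RtoC 0 | S m => f m end.

Definition LG_partial (K : nat) (f : nat -> C) : nat -> C :=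
  fun n => sum_n_m (G := C_AbelianMonoid)
    (fun k => Cmult (RtoC (/ INR k))
                    (Cminus (Nat.iter k Rsh f n) (Nat.iter k Lsh f n))) 1 K.

(* Graph of L_G: f in D(L_G) and h = L_G f. *)
Definition LG_graph (f h : nat -> C) : Prop :=
  l2 f /\ exists g, l2_lim (fun K => LG_partial K f) g /\
                    forall n, h n = Cmult Ci (g n).

(* Graph of N (maximal domain): f in D(N) and h = N f. *)
Definition N_graph (f h : nat -> C) : Prop :=
  l2 f /\ l2 (fun n => Cmult (RtoC (INR n)) (f n)) /\
  forall n, h n = Cmult (RtoC (INR n)) (f n).

(* Main.v *)
Require Import Defs.
From Stdlib Require Import Reals.
From Coquelicot Require Import Coquelicot.
From Stdlib Require Import Lia Lra.

Lemma iterL k f n : Nat.iter k Lsh f n = f (n+k)%nat.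
Proof.
  revert n; induction k; intro n; simpl.
  - rewrite Nat.add_0_r; auto.
  - unfold Lsh at 1. rewrite IHk. f_equal; lia.
Qed.

Lemma iterR k f n : Nat.iter k Rsh f n = if (k <=? n)%nat then f (n-k)%nat else RtoC 0.
Proof.
  revert n; induction k; intro n; simpl.
  - rewrite Nat.sub_0_r; auto.
  - unfold Rsh at 1. destruct n; [reflexivity|]. rewrite IHk. simpl. reflexivity.
Qed.

Lemma termid (phi c : nat -> C) (Hc : forall m, c m = Cmult (RtoC (INR m)) (phi m)) n k :
  (1 <= k)%nat ->
  Cminus (Cmult (RtoC (INR n)) (Cmult (RtoC (/ INR k))
        (Cminus (Nat.iter k Rsh phi n) (Nat.iter k Lsh phi n))))
    (Cmult (RtoC (/ INR k)) (Cminus (Nat.iter k Rsh c n) (Nat.iter k Lsh c n)))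
  = Cplus (Nat.iter k Rsh phi n) (Nat.iter k Lsh phi n).
Proof.
  intro Hk.
  assert (Hk0 : INR k <> 0) by (apply not_0_INR; lia).
  rewrite !iterL, !iterR.
  destruct (k <=? n)%nat eqn:E; rewrite !Hc, plus_INR.
  - apply Nat.leb_le in E. rewrite minus_INR by exact E.
    rewrite RtoC_inv by exact Hk0. rewrite RtoC_minus, RtoC_plus.
    field. intro H. apply Hk0. injection H; auto.
  - rewrite RtoC_inv by exact Hk0. rewrite RtoC_plus.
    field. intro H. apply Hk0. injection H; auto.
Qed.

Lemma sumid (phi c : nat -> C) (Hc : forall m, c m = Cmult (RtoC (INR m)) (phi m)) n K :
  Cminus (Cmult (RtoC (INR n)) (LG_partial K phi n)) (LG_partial K c n)
  = sum_n_m (G := C_AbelianMonoid)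
      (fun k => Cplus (Nat.iter k Rsh phi n) (Nat.iter k Lsh phi n)) 1 K.
Proof.
  unfold LG_partial. induction K.
  - rewrite !sum_n_m_zero by lia. simpl. unfold zero; simpl. ring.
  - rewrite !sum_n_Sm by lia. rewrite <- IHK, <- termid with (c := c) by (auto; lia).
    simpl. unfold plus; simpl. ring.
Qed.

Lemma sumRL (phi : nat -> C) n K :
  Cplus (sum_n_m (G := C_AbelianMonoid)
      (fun k => Cplus (Nat.iter k Rsh phi n) (Nat.iter k Lsh phi n)) 1 K) (phi n)
  = sum_n_m (G := C_AbelianMonoid) phi (n-K) (n+K).
Proof.
  induction K.
  - rewrite sum_n_m_zero by lia. rewrite Nat.sub_0_r, Nat.add_0_r, sum_n_n.
    unfold zero; simpl. ring.
  - rewrite sum_n_Sm by lia. replace (n + S K)%nat with (S (n+K)) by lia.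
    rewrite (sum_n_Sm _ (n - S K)) by lia.
    rewrite iterL, iterR.
    destruct (S K <=? n)%nat eqn:E.
    + apply Nat.leb_le in E.
      replace (n - K)%nat with (S (n - S K)) in IHK by lia.
      rewrite (sum_Sn_m _ (n - S K)) by lia. rewrite <- IHK.
      replace (n + S K)%nat with (S (n+K)) by lia.
      unfold plus; simpl. ring.
    + apply Nat.leb_gt in E.
      replace (n - S K)%nat with (n - K)%nat by lia. rewrite <- IHK.
      replace (n + S K)%nat with (S (n+K)) by lia.
      unfold plus; simpl. ring.
Qed.

Lemma keyid (phi c : nat -> C) (Hc : forall m, c m = Cmult (RtoC (INR m)) (phi m)) n K :
  (n <= K)%nat ->
  Cplus (Cminus (Cmult (RtoC (INR n)) (LG_partial K phi n)) (LG_partial K c n)) (phi n)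
  = sum_n (G := C_AbelianMonoid) phi (n+K).
Proof.
  intro H. rewrite sumid by exact Hc. rewrite sumRL.
  replace (n-K)%nat with 0%nat by lia. reflexivity.
Qed.

Lemma l2_minus f g : l2 f -> l2 g -> ex_series (fun n => (Cmod (Cminus (f n) (g n)))^2).
Proof.
  intros Hf Hg.
  apply (ex_series_le (V := R_CompleteNormedModule) _ (fun n => 2 * (Cmod (f n))^2 + 2 * (Cmod (g n))^2)).
  - intro n. change norm with (@abs R_AbsRing). simpl. unfold abs; simpl.
    pose proof (Cmod_triangle (f n) (Copp (g n))) as T. rewrite Cmod_opp in T.
    pose proof (Cmod_ge_0 (Cminus (f n) (g n))).
    pose proof (Cmod_ge_0 (f n)). pose proof (Cmod_ge_0 (g n)).
    unfold Cminus. rewrite Rabs_right by (apply Rle_ge; apply pow2_ge_0).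
    unfold Cminus in H. simpl.
    set (x := Cmod (f n + - g n)%C) in *. set (y := Cmod (f n)) in *. set (z := Cmod (g n)) in *.
    assert (x * x <= (y+z)*(y+z)) by (apply Rmult_le_compat; lra).
    assert (0 <= (y - z)*(y-z)) by apply Rle_0_sqr. nra.
  - apply (ex_series_plus (V := R_NormedModule)); apply (ex_series_scal (V := R_NormedModule) 2); auto.
Qed.

Lemma term_le_sum (a : nat -> R) : (forall n, 0 <= a n) -> forall n k, (n <= k)%nat -> a n <= sum_n a k.
Proof.
  intros Ha.
  assert (Hp : forall k, 0 <= sum_n a k).
  { induction k. rewrite sum_O; auto. rewrite sum_Sn. unfold plus; simpl. specialize (Ha (S k)). lra. }
  intros n k Hnk. induction Hnk.
  - destruct n. rewrite sum_O; lra. rewrite sum_Sn. unfold plus; simpl. specialize (Hp n). lra.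
  - rewrite sum_Sn. unfold plus; simpl. specialize (Ha (S m)). lra.
Qed.

Lemma term_le_series (a : nat -> R) : (forall n, 0 <= a n) -> ex_series a -> forall n, a n <= Series a.
Proof.
  intros Ha He n.
  assert (Hs : is_lim_seq (fun k => sum_n a (k + n)) (Series a)).
  { apply is_lim_seq_incr_n with (u := sum_n a). apply Series_correct in He. exact He. }
  assert (Hl := is_lim_seq_le (fun _ => a n) (fun k => sum_n a (k+n)) (a n) (Series a)).
  simpl in Hl. apply Hl. intro k. apply term_le_sum; auto. lia.
  apply is_lim_seq_const. exact Hs.
Qed.

Lemma pw u g : l2_lim u g -> forall n eps, 0 < eps -> exists N, forall K, (N <= K)%nat ->
  Cmod (Cminus (u K n) (g n)) < eps.
Proof.
  intros [Hg [Hu Hl]] n eps He.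
  apply is_lim_seq_spec in Hl. destruct (Hl (mkposreal (eps^2) ltac:(apply pow_lt; auto))) as [N HN].
  exists N. intros K HK. specialize (HN K HK). simpl in HN.
  assert (H1 := term_le_series (fun m => Cmod (Cminus (u K m) (g m)) ^ 2)
      ltac:(intro; apply pow2_ge_0) (l2_minus _ _ (Hu K) Hg) n).
  unfold l2_dist2 in HN. simpl in H1.
  rewrite Rminus_0_r in HN.
  pose proof (Cmod_ge_0 (Cminus (u K n) (g n))).
  assert (Cmod (Cminus (u K n) (g n)) ^ 2 < eps ^ 2).
  { eapply Rle_lt_trans. exact H1. eapply Rle_lt_trans. apply Rle_abs. exact HN. }
  nra.
Qed.

Lemma l2_to0 f : l2 f -> forall eps, 0 < eps -> exists N, forall n, (N <= n)%nat -> Cmod (f n) < eps.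
Proof.
  intros Hf eps He. apply ex_series_lim_0 in Hf. apply is_lim_seq_spec in Hf.
  destruct (Hf (mkposreal (eps^2) ltac:(apply pow_lt; auto))) as [N HN].
  exists N. intros n Hn. specialize (HN n Hn). simpl in HN. rewrite Rminus_0_r in HN.
  pose proof (Cmod_ge_0 (f n)).
  assert (Cmod (f n) ^ 2 < eps^2) by (eapply Rle_lt_trans; [apply Rle_abs|exact HN]).
  nra.
Qed.

Lemma small0 z : (forall eps, 0 < eps -> Cmod z < eps) -> z = RtoC 0.
Proof.
  intro H. apply Cmod_eq_0. pose proof (Cmod_ge_0 z).
  destruct (Req_dec (Cmod z) 0); auto. specialize (H (Cmod z)). lra.
Qed.

Theorem mainTheorem10 :
  forall phi a b c d : nat -> C,
    LG_graph phi a -> N_graph a b ->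
    N_graph phi c -> LG_graph c d ->
    forall n, Cminus (b n) (d n) = Cmult (Copp Ci) (phi n).
Proof.
  intros phi a b c d [Hphi [g [Hg Ha]]] [Ha2 [Hna Hb]] [_ [_ Hc]] [_ [g' [Hg' Hd]]].
  set (E := fun n => Cplus (Cminus (Cmult (RtoC (INR n)) (g n)) (g' n)) (phi n)).
  assert (C1 : forall n eps, 0 < eps -> exists M, forall j, (M <= j)%nat ->
            Cmod (Cminus (sum_n (G := C_AbelianMonoid) phi j) (E n)) < eps).
  { intros n eps He.
    assert (Hn : 0 < INR n + 1) by (pose proof (pos_INR n); lra).
    destruct (pw _ _ Hg n (eps / (2 * (INR n + 1)))) as [N1 H1].
    { apply Rdiv_lt_0_compat; lra. }
    destruct (pw _ _ Hg' n (eps / 2)) as [N2 H2]. lra.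
    exists (n + N1 + N2 + n)%nat. intros j Hj.
    replace j with (n + (j - n))%nat by lia.
    rewrite <- keyid with (c := c) by (auto; lia).
    specialize (H1 (j - n)%nat ltac:(lia)). specialize (H2 (j - n)%nat ltac:(lia)).
    set (P := LG_partial (j - n) phi n) in *. set (P' := LG_partial (j - n) c n) in *.
    unfold E.
    replace (Cminus (Cplus (Cminus (Cmult (RtoC (INR n)) P) P') (phi n))
                (Cplus (Cminus (Cmult (RtoC (INR n)) (g n)) (g' n)) (phi n)))
      with (Cplus (Cmult (RtoC (INR n)) (Cminus P (g n))) (Copp (Cminus P' (g' n)))) by ring.
    eapply Rle_lt_trans. apply Cmod_triangle. rewrite Cmod_opp, Cmod_mult, Cmod_R.
    rewrite Rabs_right by (apply Rle_ge, pos_INR).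
    assert (INR n * Cmod (Cminus P (g n)) <= (INR n + 1) * (eps / (2 * (INR n + 1)))).
    { apply Rmult_le_compat. apply pos_INR. apply Cmod_ge_0. lra. lra. }
    replace ((INR n + 1) * (eps / (2 * (INR n + 1)))) with (eps / 2) in H by (field; lra).
    lra. }
  assert (C2 : forall n, E n = E 0%nat).
  { intro n.
    assert (Z : Cminus (E n) (E 0%nat) = RtoC 0).
    { apply small0. intros eps He.
      destruct (C1 n (eps/2) ltac:(lra)) as [M1 HM1].
      destruct (C1 0%nat (eps/2) ltac:(lra)) as [M2 HM2].
      specialize (HM1 (M1 + M2)%nat ltac:(lia)). specialize (HM2 (M1 + M2)%nat ltac:(lia)).
      set (s := sum_n (G := C_AbelianMonoid) phi (M1 + M2)) in *.
      replace (Cminus (E n) (E 0%nat)) with (Cplus (Copp (Cminus s (E n))) (Cminus s (E 0%nat))) by ring.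
      eapply Rle_lt_trans. apply Cmod_triangle. rewrite Cmod_opp. lra. }
    replace (E n) with (Cplus (Cminus (E n) (E 0%nat)) (E 0%nat)) by ring.
    rewrite Z. ring. }
  assert (Lb : l2 b).
  { unfold l2. eapply ex_series_ext. 2: exact Hna. intro m. simpl. rewrite Hb. reflexivity. }
  assert (Ld : l2 d).
  { destruct Hg' as [Lg' _]. unfold l2. eapply ex_series_ext. 2: exact Lg'. intro m.
    simpl. rewrite Hd, Cmod_mult, Cmod_Ci. ring. }
  assert (Eq : forall m, E m = Cplus (Cmult (Copp Ci) (Cminus (b m) (d m))) (phi m)).
  { intro m. unfold E. rewrite Hb, Hd, Ha.
    replace (Cmult (Copp Ci) (Cminus (Cmult (RtoC (INR m)) (Cmult Ci (g m))) (Cmult Ci (g' m))))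
      with (Cmult (Cmult Ci (Copp Ci)) (Cminus (Cmult (RtoC (INR m)) (g m)) (g' m))) by ring.
    replace (Cmult Ci (Copp Ci)) with (RtoC 1). ring.
    apply injective_projections; simpl; ring. }
  assert (C3 : E 0%nat = RtoC 0).
  { apply small0. intros eps He.
    destruct (l2_to0 _ Lb (eps/3) ltac:(lra)) as [N1 H1].
    destruct (l2_to0 _ Ld (eps/3) ltac:(lra)) as [N2 H2].
    destruct (l2_to0 _ Hphi (eps/3) ltac:(lra)) as [N3 H3].
    set (m := (N1 + N2 + N3)%nat).
    specialize (H1 m ltac:(unfold m; lia)). specialize (H2 m ltac:(unfold m; lia)).
    specialize (H3 m ltac:(unfold m; lia)).
    rewrite <- (C2 m), Eq.
    eapply Rle_lt_trans. apply Cmod_triangle. rewrite Cmod_mult, Cmod_opp, Cmod_Ci.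
    pose proof (Cmod_triangle (b m) (Copp (d m))). rewrite Cmod_opp in H.
    unfold Cminus. lra. }
  intro n.
  assert (En : E n = RtoC 0) by (rewrite C2; exact C3).
  rewrite Eq in En.
  replace (Cminus (b n) (d n)) with (Cmult Ci (Cminus (Cplus (Cmult (Copp Ci) (Cminus (b n) (d n))) (phi n)) (phi n))).
  rewrite En. ring.
  replace (Cmult Ci (Cminus (Cplus (Cmult (Copp Ci) (Cminus (b n) (d n))) (phi n)) (phi n)))
    with (Cmult (Cmult Ci (Copp Ci)) (Cminus (b n) (d n))) by ring.
  replace (Cmult Ci (Copp Ci)) with (RtoC 1). ring.
  apply injective_projections; simpl; ring.
Qed.
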